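(* Let $C>0$ be a constant such that for all real numbers $\{c_{ij}:1\le i,j\le 4\}$ one has $\min_{S\in\{-1,1\}^8}\sum_{1\le i,j\le 4}c_{ij}S_{u_i}S_{v_j}\le -C\sum_{1\le i,j\le 4}|c_{ij}|$ (such a constant exists, e.g. some $C>\ln(1+\sqrt2)/\pi$). Let $r$ be a positive integer, let $G_r=(V,E)$ be the Chimera graph with $E=E_0\cup E_1\cup E_{01}$, and let $c_{uv}\in\mathbb{R}$ for $(u,v)\in E$ and $d_u\in\mathbb{R}$ for $u\in V$ be arbitrary. Let $H^*=\min_{S\in\{-1,1\}^V}\left(\sum_{(u,v)\in E}c_{uv}S_uS_v+\sum_{u\in V}d_uS_u\right)$, $A_0=\sum_{(u,v)\in E_0}|c_{uv}|$, $A_1=\sum_{(u,v)\in E_1}|c_{uv}|$, and $A_{01}=\sum_{(u,v)\in E_{01}}|c_{uv}|$. Then $H^*\le A_0+A_1-CA_{01}$.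
   Context: The Chimera graph $G_r=(V,E)$: $V=\{(i,j,k,l)\in\mathbb{Z}^4: 1\le i,j\le r,\ 1\le k\le 4,\ l\in\{0,1\}\}$. $E=E_0\cup E_1\cup E_{01}$ (disjoint), where $E_0$ consists of the edges $\{(i,j,k,0),(i+1,j,k,0)\}$ for $1\le i\le r-1$, $1\le j\le r$, $1\le k\le 4$; $E_1$ consists of the edges $\{(i,j,k,1),(i,j+1,k,1)\}$ for $1\le i\le r$, $1\le j\le r-1$, $1\le k\le 4$; and $E_{01}$ consists of the edges $\{(i,j,k_0,0),(i,j,k_1,1)\}$ for $1\le i,j\le r$, $1\le k_0,k_1\le 4$. In the hypothesis on $C$, $u_1,\dots,u_4$ and $v_1,\dots,v_4$ denote the two sides of $K_{4,4}$. *)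

(* Defs.v *)
From HB Require Import structures.
From mathcomp Require Import all_boot all_order all_algebra.
Set Implicit Arguments. Unset Strict Implicit. Unset Printing Implicit Defensive.
Import Order.TTheory GRing.Theory Num.Theory.
Local Open Scope ring_scope.

Definition spin {R : pzRingType} (b : bool) : R := if b then 1 else -1.

Definition fmin {R : realDomainType} (T : finType) (x0 : T) (f : T -> R) : R :=
  \big[Num.min/f x0]_(x : T) f x.

(* Chimera graph G_r: vertex (i,j,k,l) with 0-based i,j < r, k < 4, l = false (0) / true (1). *)
Definition chim_vert (r : nat) : finType := ('I_r * 'I_r * 'I_4 * bool)%type.

Definition cv_i r (u : chim_vert r) : nat := u.1.1.1.
Definition cv_j r (u : chim_vert r) : nat := u.1.1.2.
Definition cv_k r (u : chim_vert r) : 'I_4 := u.1.2.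
Definition cv_l r (u : chim_vert r) : bool := u.2.

(* Each undirected edge is listed exactly once as an oriented pair (u,v). *)
Definition E0 r (u v : chim_vert r) : bool :=
  [&& ~~ cv_l u, ~~ cv_l v, cv_i v == (cv_i u).+1, cv_j v == cv_j u & cv_k v == cv_k u].
Definition E1 r (u v : chim_vert r) : bool :=
  [&& cv_l u, cv_l v, cv_i v == cv_i u, cv_j v == (cv_j u).+1 & cv_k v == cv_k u].
Definition E01 r (u v : chim_vert r) : bool :=
  [&& ~~ cv_l u, cv_l v, cv_i v == cv_i u & cv_j v == cv_j u].
Definition Echim r (u v : chim_vert r) : bool := [|| E0 u v, E1 u v | E01 u v].

Definition chim_H {R : realDomainType} r (c : chim_vert r -> chim_vert r -> R)
  (d : chim_vert r -> R) (S : {ffun chim_vert r -> bool}) : R :=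
  \sum_(u : chim_vert r) \sum_(v : chim_vert r | Echim u v) c u v * spin (S u) * spin (S v)
  + \sum_(u : chim_vert r) d u * spin (S u).

Definition abs_sum {R : realDomainType} r (E : rel (chim_vert r))
  (c : chim_vert r -> chim_vert r -> R) : R :=
  \sum_(u : chim_vert r) \sum_(v : chim_vert r | E u v) `|c u v|.

(* K_{4,4} energy: sides u_1..u_4 = inl, v_1..v_4 = inr. *)
Definition k44_H {R : realDomainType} (c : 'I_4 -> 'I_4 -> R)
  (S : {ffun ('I_4 + 'I_4)%type -> bool}) : R :=
  \sum_(i < 4) \sum_(j < 4) c i j * spin (S (inl i)) * spin (S (inr j)).

(* Main.v *)
Require Import Defs.
From HB Require Import structures.
From mathcomp Require Import all_boot all_order all_algebra.
Import Order.TTheory GRing.Theory Num.Theory.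
Local Open Scope ring_scope.

Section Aux.
Variable R : realFieldType.

Lemma fmin_le (T : finType) (x0 : T) (f : T -> R) x : fmin x0 f <= f x.
Proof. by rewrite /fmin (bigD1 x) //= ge_min lexx. Qed.

Lemma fmin_att (T : finType) (x0 : T) (f : T -> R) : exists s, fmin x0 f = f s.
Proof.
rewrite /fmin; apply: (big_ind (fun y => exists s, y = f s)); first by exists x0.
- by move=> a b [s ->] [t ->]; rewrite minElt; case: ifP => _; [exists s|exists t].
- by move=> i _; exists i.
Qed.

Lemma normr_spin (b : bool) : `|spin b : R| = 1.
Proof. by case: b; rewrite /spin ?normrN normr1. Qed.

Lemma spin_neg (b : bool) : spin (~~ b) = - spin b :> R.
Proof. by case: b; rewrite /spin ?opprK. Qed.

Lemma sumb (F : bool -> R) : \sum_(l : bool) F l = F true + F false.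
Proof. exact: big_bool. Qed.

Variable r : nat.

Lemma sum_vert (F : chim_vert r -> R) :
  \sum_(u : chim_vert r) F u = \sum_(y : 'I_r * 'I_r) \sum_(k < 4) \sum_(l : bool) F (y, k, l).
Proof.
symmetry.
rewrite (pair_big _ _ (fun y k => \sum_(l : bool) F (y, k, l))) /=.
rewrite (pair_big _ _ (fun p l => F (p.1, p.2, l))) /=.
by apply: eq_bigr => -[[y k] l].
Qed.

Lemma split_E (F : chim_vert r -> chim_vert r -> R) :
  \sum_u \sum_(v | Echim u v) F u v =
  \sum_u \sum_(v | E0 u v) F u v + \sum_u \sum_(v | E1 u v) F u v
  + \sum_u \sum_(v | E01 u v) F u v.
Proof.
rewrite -!big_split; apply: eq_bigr => u _ /=.
rewrite (big_mkcond (Echim u)) (big_mkcond (E0 u)) (big_mkcond (E1 u)) (big_mkcond (E01 u)).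
rewrite -!big_split; apply: eq_bigr => v _ /=.
rewrite /Echim /E0 /E1 /E01.
case: (cv_l u); case: (cv_l v) => /=; rewrite ?orbF ?add0r ?addr0 //.
Qed.

Lemma E01_sum (G : chim_vert r -> chim_vert r -> R) :
  \sum_u \sum_(v | E01 u v) G u v =
  \sum_(y : 'I_r * 'I_r) \sum_(a < 4) \sum_(b < 4) G (y, a, false) (y, b, true).
Proof.
rewrite sum_vert; apply: eq_bigr => y _; apply: eq_bigr => a _.
idtac.
rewrite sumb big_pred0; last by move=> v; rewrite /E01.
rewrite add0r big_mkcond sum_vert (bigD1 y) //= [X in _ + X = _]big1 ?addr0; last first.
  move=> y' ny; apply: big1 => b _; rewrite sumb /= /E01 /cv_i /cv_j /cv_l /=.
  rewrite addr0; case: ifP => // /andP[e1 e2]; exfalso; move/negP: ny; apply.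
  by case: y y' e1 e2 => [i j] [i' j'] /= e1 e2; rewrite xpair_eqE -!val_eqE e1 e2.
apply: eq_bigr => b _; rewrite sumb /= /E01 /cv_i /cv_j /cv_l /= !eqxx.
by rewrite addr0.
Qed.

End Aux.

Theorem lemma3 (R : realFieldType) (C : R) (HC0 : 0 < C)
  (HC : forall c : 'I_4 -> 'I_4 -> R,
      fmin [ffun=> true] (k44_H c) <= - C * \sum_(i < 4) \sum_(j < 4) `|c i j|)
  (r : nat) (Hr : (0 < r)%N)
  (c : chim_vert r -> chim_vert r -> R) (d : chim_vert r -> R) :
  fmin [ffun=> true] (chim_H c d)
    <= abs_sum (@E0 r) c + abs_sum (@E1 r) c - C * abs_sum (@E01 r) c.
Proof.
pose cc (y : 'I_r * 'I_r) (a b : 'I_4) := c (y, a, false) (y, b, true).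
pose P y (s : {ffun ('I_4 + 'I_4)%type -> bool}) :=
  k44_H (cc y) s <= - C * \sum_(i < 4) \sum_(j < 4) `|cc y i j|.
pose sel y := odflt [ffun=> true] [pick s | P y s].
have Hsel y : P y (sel y).
  rewrite /sel; case: pickP => [s Hs //|H0].
  have [s Hs] := @fmin_att R _ [ffun=> true] (k44_H (cc y)).
  by move: (H0 s); rewrite /P -Hs HC.
pose S : {ffun chim_vert r -> bool} :=
  [ffun u => sel u.1.1 (if u.2 then inr u.1.2 else inl u.1.2)].
pose S' : {ffun chim_vert r -> bool} := [ffun u => ~~ S u].
pose Q (T : {ffun chim_vert r -> bool}) :=
  \sum_(u : chim_vert r) \sum_(v : chim_vert r | Echim u v) c u v * spin (T u) * spin (T v).
pose L := \sum_(u : chim_vert r) d u * spin (S u).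
have HS : chim_H c d S = Q S + L by [].
have HS' : chim_H c d S' = Q S - L.
  rewrite /chim_H /L -sumrN; congr (_ + _).
    apply: eq_bigr => u _; apply: eq_bigr => v _.
    by rewrite /S' !ffunE !spin_neg -mulrA mulrNN mulrA.
  by apply: eq_bigr => u _; rewrite /S' ffunE spin_neg mulrN.
have Hmin : fmin [ffun=> true] (chim_H c d) <= Q S.
  case: (lerP L 0) => hL.
    apply: le_trans (@fmin_le R _ _ _ S) _; rewrite HS.
    by rewrite -[leRHS]addr0 lerD2l.
  apply: le_trans (@fmin_le R _ _ _ S') _; rewrite HS'.
  by rewrite lerBlDr lerDl ltW.
apply: le_trans Hmin _.
rewrite /Q split_E.
have Hb E : \sum_u \sum_(v | E u v) c u v * spin (S u) * spin (S v) <= abs_sum E c.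
  apply: ler_sum => u _; apply: ler_sum => v _.
  by apply: le_trans (ler_norm _) _; rewrite !normrM !normr_spin !mulr1.
apply: lerD; first exact: lerD.
rewrite E01_sum /abs_sum E01_sum mulr_sumr -sumrN.
apply: ler_sum => y _; rewrite -mulNr.
apply: (le_trans _ (Hsel y)); rewrite /k44_H le_eqVlt; apply/predU1P; left.
apply/eq_bigr => a _; apply: eq_bigr => b _.
by rewrite /S !ffunE.
Qed.
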